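(* Let $X$ be a topological space. For every irreducible closed subset $C$ of $X$, let $e_C:\mathcal OX\to[0,\infty]$ map every open $U$ to $1$ if $U\cap C\neq\emptyset$ and to $0$ otherwise. Then $e_C$ is a point-continuous valuation. If $C$ is the closure of $\{x\}$ for some point $x$, then $e_C=\delta_x$.
   Context: A non-empty subset $A$ is irreducible if $A\subseteq B\cup C$ with $B,C$ closed implies $A\subseteq B$ or $A\subseteq C$. A valuation is a map $\mathcal OX\to[0,\infty]$ with value $0$ on $\emptyset$, monotone and modular. It is point-continuous if for every open $U$ and real $r$ with $0\le r<\nu(U)$ there is a finite $A\subseteq U$ with $\nu(V)>r$ for every open $V\supseteq A$. $\delta_x$ is the Dirac valuation: $\delta_x(U)=1$ if $x\in U$, else $0$. *)

(* Defs.v *)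
From HB Require Import structures.
From mathcomp Require Import all_boot all_order all_algebra.
From mathcomp Require Import all_classical all_reals topology.
Set Implicit Arguments. Unset Strict Implicit. Unset Printing Implicit Defensive.
Import Order.TTheory GRing.Theory Num.Theory.
Local Open Scope classical_set_scope.
Local Open Scope ring_scope.
Local Open Scope ereal_scope.

(* Set functions on X are modelled as maps set X -> \bar R; only their values
   on open sets matter (O X is the lattice of open sets). *)

Definition irreducible (X : topologicalType) (A : set X) : Prop :=
  A !=set0 /\
  forall B C : set X, closed B -> closed C -> A `<=` B `|` C ->
    A `<=` B \/ A `<=` C.

Definition valuation (R : realType) (X : topologicalType)
  (nu : set X -> \bar R) : Prop :=
  [/\ forall U, open U -> 0 <= nu U,
      nu set0 = 0,
      forall U V, open U -> open V -> U `<=` V -> nu U <= nu V &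
      forall U V, open U -> open V -> nu U + nu V = nu (U `|` V) + nu (U `&` V)].

Definition point_continuous (R : realType) (X : topologicalType)
  (nu : set X -> \bar R) : Prop :=
  forall (U : set X) (r : R), open U -> (0 <= r)%R -> r%:E < nu U ->
    exists A : set X, [/\ finite_set A, A `<=` U &
      forall V : set X, open V -> A `<=` V -> r%:E < nu V].

Definition dirac_val (R : realType) (X : topologicalType) (x : X)
  (U : set X) : \bar R :=
  if pselect (U x) then 1 else 0.

Definition e_closed (R : realType) (X : topologicalType) (C : set X)
  (U : set X) : \bar R :=
  if pselect (U `&` C !=set0) then 1 else 0.

(* Main.v *)
Require Import Defs.
From HB Require Import structures.
From mathcomp Require Import all_boot all_order all_algebra.
From mathcomp Require Import all_classical all_reals topology.
Local Open Scope classical_set_scope.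
Local Open Scope ereal_scope.

Lemma eC1 (R : realType) (X : topologicalType) (C U : set X) :
  U `&` C !=set0 -> e_closed R C U = 1.
Proof. by rewrite /e_closed; case: pselect. Qed.

Lemma eC0 (R : realType) (X : topologicalType) (C U : set X) :
  ~ (U `&` C !=set0) -> e_closed R C U = 0.
Proof. by rewrite /e_closed; case: pselect. Qed.

Arguments eC0 {R X C U}.
Arguments eC1 {R X C U}.

Theorem lemma4p1 (R : realType) (X : topologicalType) (C : set X) :
  closed C -> irreducible C ->
  (valuation (e_closed R C) /\ point_continuous (e_closed R C)) /\
  (forall x : X, C = closure [set x] ->
     forall U : set X, open U -> e_closed R C U = dirac_val R x U).
Proof.
move=> clC [C0 irrC].
have key : forall U V : set X, open U -> open V -> U `&` C !=set0 ->
    V `&` C !=set0 -> (U `&` V) `&` C !=set0.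
  move=> U V oU oV [u [Uu Cu]] [v [Vv Cv]].
  have [//|H] := pselect ((U `&` V) `&` C !=set0); exfalso.
  have := irrC (~` U) (~` V) (open_closedC oU) (open_closedC oV).
  case.
  - move=> c Cc; have [/=|] := pselect (U c); last by left.
    move=> Uc; right => Vc; apply: H; exists c; split => //.
  - by move=> /(_ u Cu).
  - by move=> /(_ v Cv).
split; [split; [split|] |].
- move=> U _; have [H|H] := pselect (U `&` C !=set0).
    by rewrite eC1 ?lee01.
  by rewrite eC0.
- by rewrite eC0 // => -[x [[]]].
- move=> U V _ _ UV.
  have [HU|HU] := pselect (U `&` C !=set0).
    rewrite eC1 // eC1 //; case: HU => x [Ux Cx]; exists x; split => //; exact: UV.
  rewrite (eC0 HU); have [HV|HV] := pselect (V `&` C !=set0).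
    by rewrite eC1 ?lee01.
  by rewrite eC0.
- move=> U V oU oV.
  have [HU|HU] := pselect (U `&` C !=set0); have [HV|HV] := pselect (V `&` C !=set0).
  + rewrite (eC1 HU) (eC1 HV) (eC1 (key _ _ oU oV HU HV)) eC1 //.
    by case: HU => x [Ux Cx]; exists x; split => //; left.
  + rewrite (eC1 HU) (eC0 HV) eC1; last first.
      by case: HU => x [Ux Cx]; exists x; split => //; left.
    by rewrite eC0 // => -[x [[Ux Vx] Cx]]; apply: HV; exists x.
  + rewrite (eC0 HU) (eC1 HV) eC1; last first.
      by case: HV => x [Ux Cx]; exists x; split => //; right.
    by rewrite eC0 ?add0e ?adde0 // => -[x [[Ux Vx] Cx]]; apply: HU; exists x.
  + rewrite (eC0 HU) (eC0 HV) eC0; last first.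
      by move=> [x [[Ux|Vx] Cx]]; [apply: HU|apply: HV]; exists x.
    by rewrite eC0 // => -[x [[Ux Vx] Cx]]; apply: HU; exists x.
- move=> U r oU r0.
  have [[x [Ux Cx]]|H] := pselect (U `&` C !=set0); last first.
    by rewrite eC0 // lte_fin Order.TotalTheory.ltNge r0.
  rewrite eC1; last by exists x.
  move=> r1.
  exists [set x]; split; first exact: finite_set1.
    by move=> y ->.
  move=> V oV Vx; rewrite eC1 //; exists x; split => //; exact: Vx.
- move=> x -> U oU; rewrite /dirac_val.
  case: (pselect (U x)) => Ux.
    rewrite eC1 //; exists x; split => //; exact: subset_closure.
  rewrite eC0 // => -[y [Uy cy]]; apply: Ux.
  have : nbhs y U by apply: open_nbhs_nbhs; split.
  by move=> /cy [z [-> Uz]].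
Qed.
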